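(* Let $\lambda=2\cos(\pi/5)$, let $p$ be a rational prime and $n$ a positive integer. Then the images in $SL(2,\mathbb Z[\lambda]/p^{n+1}\mathbb Z[\lambda])$ of the matrices $$\begin{pmatrix}1&p^n\lambda^i\\0&1\end{pmatrix},\quad \begin{pmatrix}1&0\\-p^n\lambda^i&1\end{pmatrix},\quad \begin{pmatrix}1-p^n\lambda^{i+1}&p^n\lambda^{i+2}\\-p^n\lambda^i&1+p^n\lambda^{i+1}\end{pmatrix},\qquad i=0,1,$$ generate a group of order $p^6$.
   Context: $\lambda=2\cos(\pi/5)$ satisfies $\lambda^2=\lambda+1$; entries are reduced modulo the ideal $p^{n+1}\mathbb Z[\lambda]$. *)

(* Defs.v *)
From mathcomp Require Import all_boot all_order all_algebra.
Set Implicit Arguments. Unset Strict Implicit. Unset Printing Implicit Defensive.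
Import GRing.Theory.
Local Open Scope ring_scope.

(* The quotient ring Z[lambda]/M Z[lambda], with
   lambda^2 = lambda + 1, is represented as pairs (a, b) : 'Z_M * 'Z_M,
   standing for a + b*lambda (Z[lambda] is free over Z with basis 1, lambda).
   We only use it with M >= 2, where 'Z_M is genuinely Z/MZ. *)
Definition Zl (M : nat) : finType := ('Z_M * 'Z_M)%type.

Section ZlOps.
Variable M : nat.
Definition zl0 : Zl M := (0, 0).
Definition zl1 : Zl M := (1, 0).
Definition lam : Zl M := (0, 1).
Definition zladd (x y : Zl M) : Zl M := (x.1 + y.1, x.2 + y.2).
Definition zlopp (x : Zl M) : Zl M := (- x.1, - x.2).
(* (a + b l)(c + d l) = ac + bd + (ad + bc + bd) l   since l^2 = l + 1 *)
Definition zlmul (x y : Zl M) : Zl M :=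
  (x.1 * y.1 + x.2 * y.2, x.1 * y.2 + x.2 * y.1 + x.2 * y.2).
Definition zlnat (k : nat) : Zl M := (k%:R, 0).
Definition lam_pow (i : nat) : Zl M := iter i (zlmul lam) zl1.

Definition Mat : finType := (Zl M * Zl M * Zl M * Zl M)%type.
Definition mk (a b c d : Zl M) : Mat := (a, b, c, d).
Definition m11 (A : Mat) := A.1.1.1.
Definition m12 (A : Mat) := A.1.1.2.
Definition m21 (A : Mat) := A.1.2.
Definition m22 (A : Mat) := A.2.
Definition mmul (A B : Mat) : Mat :=
  mk (zladd (zlmul (m11 A) (m11 B)) (zlmul (m12 A) (m21 B)))
     (zladd (zlmul (m11 A) (m12 B)) (zlmul (m12 A) (m22 B)))
     (zladd (zlmul (m21 A) (m11 B)) (zlmul (m22 A) (m21 B)))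
     (zladd (zlmul (m21 A) (m12 B)) (zlmul (m22 A) (m22 B))).
Definition mid : Mat := mk zl1 zl0 zl0 zl1.
Definition mdet (A : Mat) : Zl M :=
  zladd (zlmul (m11 A) (m22 A)) (zlopp (zlmul (m12 A) (m21 A))).
(* inverse in SL(2): the adjugate *)
Definition minv (A : Mat) : Mat :=
  mk (m22 A) (zlopp (m12 A)) (zlopp (m21 A)) (m11 A).

Definition gen_group (S : {set Mat}) : {set Mat} :=
  \bigcap_(A : {set Mat} | [&& S \subset A, mid \in A,
         [forall x in A, forall y in A, mmul x y \in A] &
         [forall x in A, minv x \in A]]) A.
End ZlOps.

Definition modulus (p n : nat) : nat := (p ^ n.+1)%N.

Definition gens (p n : nat) : {set Mat (modulus p n)} :=
  let M := modulus p n in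
  let pn : Zl M := zlnat M (p ^ n) in
  let t (i : nat) : Zl M := zlmul pn (lam_pow M i) in
  [set A | [exists i : 'I_2,
     [|| A == mk (zl1 M) (t i) (zl0 M) (zl1 M),
         A == mk (zl1 M) (zl0 M) (zlopp (t i)) (zl1 M) |
         A == mk (zladd (zl1 M) (zlopp (t i.+1))) (t i.+2)
                 (zlopp (t i)) (zladd (zl1 M) (t i.+1))]]].

(* Main.v *)
Require Import Defs.
From mathcomp Require Import all_boot all_order all_algebra.
From mathcomp Require Import ring.
Set Implicit Arguments. Unset Strict Implicit. Unset Printing Implicit Defensive.
Import GRing.Theory.
Local Open Scope ring_scope.

Definition hm (M : nat) (q a0 a1 b0 b1 c0 c1 : 'Z_M) : Mat M :=
  mk ((1 + q * a0, q * a1) : Zl M) (q * b0, q * b1) (q * c0, q * c1)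
     (1 - q * a0, - (q * a1)).

Ltac unf := rewrite /hm /mmul /mid /minv /mk /m11 /m12 /m21 /m22 /zladd
  /zlmul /zlopp /zl1 /zl0 /zlnat /lam_pow /lam /=.

Lemma hm_mul M (q a0 a1 b0 b1 c0 c1 a0' a1' b0' b1' c0' c1' : 'Z_M) :
  q * q = 0 ->
  mmul (hm q a0 a1 b0 b1 c0 c1) (hm q a0' a1' b0' b1' c0' c1') =
  hm q (a0 + a0') (a1 + a1') (b0 + b0') (b1 + b1') (c0 + c0') (c1 + c1').
Proof.
move=> qq; unf.
by congr (_, _, _, _); congr pair; ring: qq.
Qed.

Lemma hm_inv M (q a0 a1 b0 b1 c0 c1 : 'Z_M) :
  minv (hm q a0 a1 b0 b1 c0 c1) = hm q (- a0) (- a1) (- b0) (- b1) (- c0) (- c1).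
Proof. by unf; congr (_, _, _, _); congr pair; ring. Qed.

Lemma hm0 M (q : 'Z_M) : hm q 0 0 0 0 0 0 = mid M.
Proof. by unf; congr (_, _, _, _); congr pair; ring. Qed.

Lemma natr0_mod M k : (1 < M)%N -> (M %| k)%N -> (k%:R : 'Z_M) = 0.
Proof.
move=> M1 /eqP Hk; apply: val_inj; rewrite /= val_Zp_nat //.
Qed.

Definition qq_ (p n : nat) : 'Z_(modulus p n) := (p ^ n)%:R.

Lemma M_gt1 p n : prime p -> (1 < modulus p n)%N.
Proof.
move=> pp; rewrite /modulus; have p1 := prime_gt1 pp.
by rewrite (leq_trans p1) // -{1}(expn1 p) leq_pexp2l // ltnW.
Qed.

Lemma qq0 p n : prime p -> (0 < n)%N -> qq_ p n * qq_ p n = 0.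
Proof.
move=> pp n0; rewrite /qq_ -natrM natr0_mod ?M_gt1 //.
by rewrite /modulus -expnD dvdn_exp2l // -addn1 leq_add2l.
Qed.

Lemma qp0 p n : prime p -> qq_ p n * p%:R = 0.
Proof.
move=> pp; rewrite /qq_ -natrM natr0_mod ?M_gt1 //.
by rewrite /modulus expnSr.
Qed.

Lemma qmod p n (r : 'Z_(modulus p n)) : prime p ->
  qq_ p n * r = qq_ p n * (((r : nat) %% p)%N)%:R.
Proof.
move=> pp; rewrite -{1}(natr_Zp r) {1}(divn_eq r p) natrD natrM.
by rewrite mulrDr mulrA [qq_ p n * _]mulrC -mulrA qp0 // mulr0 add0r.
Qed.

Lemma qinj p n (x y : nat) : prime p -> (x < p)%N -> (y < p)%N ->
  qq_ p n * x%:R = qq_ p n * y%:R -> x = y.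
Proof.
move=> pp xp yp; rewrite /qq_ -!natrM => /(congr1 (@nat_of_ord _)).
have M1 := M_gt1 n pp.
rewrite !val_Zp_nat // !modn_small; last first.
- by rewrite /modulus expnSr ltn_pmul2l // expn_gt0 prime_gt0.
- by rewrite /modulus expnSr ltn_pmul2l // expn_gt0 prime_gt0.
by move/eqP; rewrite eqn_pmul2l ?expn_gt0 ?prime_gt0 // => /eqP.
Qed.

Definition T6 (p : nat) : finType :=
  ('I_p * 'I_p * 'I_p * 'I_p * 'I_p * 'I_p)%type.

Definition fT (p n : nat) (x : T6 p) : Mat (modulus p n) :=
  let '(a0, a1, b0, b1, c0, c1) := x in
  hm (qq_ p n) (a0 : nat)%:R (a1 : nat)%:R (b0 : nat)%:R (b1 : nat)%:R
     (c0 : nat)%:R (c1 : nat)%:R.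

Definition H (p n : nat) : {set Mat (modulus p n)} := [set fT n x | x : T6 p].

Lemma H_elim p n A : A \in H p n ->
  exists a0 a1 b0 b1 c0 c1, A = hm (qq_ p n) a0 a1 b0 b1 c0 c1.
Proof.
by move/imsetP=> [[[[[[x0 x1] x2] x3] x4] x5] _ ->]; do 6 eexists.
Qed.

Lemma hm_in_H p n a0 a1 b0 b1 c0 c1 : prime p ->
  hm (qq_ p n) a0 a1 b0 b1 c0 c1 \in H p n.
Proof.
move=> pp; have p0 := prime_gt0 pp.
apply/imsetP.
exists (Ordinal (ltn_pmod a0 p0), Ordinal (ltn_pmod a1 p0),
        Ordinal (ltn_pmod b0 p0), Ordinal (ltn_pmod b1 p0),
        Ordinal (ltn_pmod c0 p0), Ordinal (ltn_pmod c1 p0)) => //=.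
rewrite /hm (qmod a0) // (qmod a1) // (qmod b0) // (qmod b1) //.
by rewrite (qmod c0) // (qmod c1).
Qed.

Lemma in_H_of p n A a0 a1 b0 b1 c0 c1 : prime p ->
  A = hm (qq_ p n) a0 a1 b0 b1 c0 c1 -> A \in H p n.
Proof. by move=> pp ->; apply: hm_in_H. Qed.

Lemma fT_inj p n : prime p -> injective (@fT p n).
Proof.
move=> pp [[[[[x0 x1] x2] x3] x4] x5] [[[[[y0 y1] y2] y3] y4] y5] /= E.
have e1 := congr1 (fun A => (m11 A).1) E.
have e2 := congr1 (fun A => (m11 A).2) E.
have e3 := congr1 (fun A => (m12 A).1) E.
have e4 := congr1 (fun A => (m12 A).2) E.
have e5 := congr1 (fun A => (m21 A).1) E.
have e6 := congr1 (fun A => (m21 A).2) E.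
move: e1 e2 e3 e4 e5 e6; rewrite /= => /addrI e1 e2 e3 e4 e5 e6.
have Q (x y : 'I_p) (e : qq_ p n * (x : nat)%:R = qq_ p n * (y : nat)%:R) : x = y.
  by apply: val_inj; apply: (qinj pp (ltn_ord x) (ltn_ord y) e).
by rewrite (Q _ _ e1) (Q _ _ e2) (Q _ _ e3) (Q _ _ e4) (Q _ _ e5) (Q _ _ e6).
Qed.

Lemma card_H p n : prime p -> #|H p n| = (p ^ 6)%N.
Proof.
move=> pp; rewrite /H card_imset; last exact: fT_inj.
by rewrite !card_prod !card_ord !expnS expn0 muln1 !mulnA.
Qed.

Ltac meq := unf; congr (_, _, _, _); congr pair; ring.

Lemma gens_H p n : prime p -> gens p n \subset H p n.
Proof.
move=> pp; apply/subsetP => A; rewrite inE => /existsP [[[|[|i]] Hi]] //=.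
  case/or3P=> /eqP->.
  - by apply: (@in_H_of p n _ 0 0 1 0 0 0 pp); meq.
  - by apply: (@in_H_of p n _ 0 0 0 0 (-1) 0 pp); meq.
  - by apply: (@in_H_of p n _ 0 (-1) 1 1 (-1) 0 pp); meq.
case/or3P=> /eqP->.
- by apply: (@in_H_of p n _ 0 0 0 1 0 0 pp); meq.
- by apply: (@in_H_of p n _ 0 0 0 0 0 (-1) pp); meq.
- by apply: (@in_H_of p n _ (-1) (-1) 1 2 0 (-1) pp); meq.
Qed.

Lemma gen_in p n a0 a1 b0 b1 c0 c1 :
  let v := [:: a0; a1; b0; b1; c0; c1] in
  [|| v == [:: 0; 0; 1; 0; 0; 0], v == [:: 0; 0; 0; 0; -1; 0],
      v == [:: 0; -1; 1; 1; -1; 0], v == [:: 0; 0; 0; 1; 0; 0],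
      v == [:: 0; 0; 0; 0; 0; -1] | v == [:: -1; -1; 1; 2; 0; -1]] ->
  hm (qq_ p n) a0 a1 b0 b1 c0 c1 \in gens p n.
Proof.
move=> v; rewrite /v; case/or4P => [/eqP[-> -> -> -> -> ->]|/eqP[-> -> -> -> -> ->]
  |/eqP[-> -> -> -> -> ->]|]; last case/or3P => [/eqP[-> -> -> -> -> ->]
  |/eqP[-> -> -> -> -> ->]|/eqP[-> -> -> -> -> ->]];
  rewrite inE; apply/existsP.
- by exists ord0; apply/or3P; apply: Or31; apply/eqP; meq.
- by exists ord0; apply/or3P; apply: Or32; apply/eqP; meq.
- by exists ord0; apply/or3P; apply: Or33; apply/eqP; meq.
- by exists (Ordinal (isT : (1 < 2)%N)); apply/or3P; apply: Or31; apply/eqP; meq.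
- by exists (Ordinal (isT : (1 < 2)%N)); apply/or3P; apply: Or32; apply/eqP; meq.
- by exists (Ordinal (isT : (1 < 2)%N)); apply/or3P; apply: Or33; apply/eqP; meq.
Qed.

Lemma H_sub_gen p n : prime p -> (0 < n)%N -> H p n \subset gen_group (gens p n).
Proof.
move=> pp n0; apply/subsetP => A /H_elim [a0 [a1 [b0 [b1 [c0 [c1 ->]]]]]].
have qq := qq0 pp n0.
apply/bigcapP => B /and4P [sB mB cB iB].
have mulB x y : x \in B -> y \in B -> mmul x y \in B.
  by move=> hx hy; exact: (forall_inP (forall_inP cB x hx) y hy).
set q := qq_ p n.
have scB u0 u1 u2 u3 u4 u5 : hm q u0 u1 u2 u3 u4 u5 \in B -> forall k : 'Z__,
    hm q (k * u0) (k * u1) (k * u2) (k * u3) (k * u4) (k * u5) \in B.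
  move=> hu k; rewrite -(natr_Zp k); elim: (k : nat) => [|m IH].
    have -> : hm q (0%:R * u0) (0%:R * u1) (0%:R * u2) (0%:R * u3)
        (0%:R * u4) (0%:R * u5) = mid _ by meq.
    exact: mB.
  have -> : hm q (m.+1%:R * u0) (m.+1%:R * u1) (m.+1%:R * u2) (m.+1%:R * u3)
      (m.+1%:R * u4) (m.+1%:R * u5) =
      mmul (hm q (m%:R * u0) (m%:R * u1) (m%:R * u2) (m%:R * u3)
      (m%:R * u4) (m%:R * u5)) (hm q u0 u1 u2 u3 u4 u5).
    by rewrite hm_mul //; congr hm; rewrite mulrS; ring.
  exact: mulB.
have G a b c d e f : hm q a b c d e f \in gens p n -> forall k,
    hm q (k * a) (k * b) (k * c) (k * d) (k * e) (k * f) \in B.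
  by move=> h; apply: scB; apply: (subsetP sB).
set x6 := - a0; set x5 := a0 - a1.
set x1 := b0 - x5 - x6; set x2 := b1 - x5 - x6 * 2%:R.
set x3 := - c0 - x5; set x4 := - c1 - x6.
have -> : hm q a0 a1 b0 b1 c0 c1 =
  mmul (mmul (mmul (mmul (mmul
    (hm q (x1 * 0) (x1 * 0) (x1 * 1) (x1 * 0) (x1 * 0) (x1 * 0))
    (hm q (x2 * 0) (x2 * 0) (x2 * 0) (x2 * 1) (x2 * 0) (x2 * 0)))
    (hm q (x3 * 0) (x3 * 0) (x3 * 0) (x3 * 0) (x3 * -1) (x3 * 0)))
    (hm q (x4 * 0) (x4 * 0) (x4 * 0) (x4 * 0) (x4 * 0) (x4 * -1)))
    (hm q (x5 * 0) (x5 * -1) (x5 * 1) (x5 * 1) (x5 * -1) (x5 * 0)))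
    (hm q (x6 * -1) (x6 * -1) (x6 * 1) (x6 * 2%:R) (x6 * 0) (x6 * -1)).
  rewrite !hm_mul //; congr hm; rewrite /x1 /x2 /x3 /x4 /x5 /x6; ring.
by repeat (apply: (mulB) || (apply: (G); apply: gen_in; rewrite eqxx ?orbT)).
Qed.

Theorem lemmaA (p n : nat) :
  prime p -> (0 < n)%N -> #|gen_group (gens p n)| = (p ^ 6)%N.
Proof.
move=> pp n0; rewrite -(card_H n pp).
suff -> : gen_group (gens p n) = H p n by [].
apply/eqP; rewrite eqEsubset H_sub_gen // andbT.
rewrite /gen_group; apply: bigcap_inf.
apply/and4P; split.
- exact: gens_H.
- by apply: (@in_H_of p n _ 0 0 0 0 0 0 pp); rewrite hm0.
- apply/forall_inP => x /H_elim [a0 [a1 [b0 [b1 [c0 [c1 ->]]]]]].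
  apply/forall_inP => y /H_elim [a0' [a1' [b0' [b1' [c0' [c1' ->]]]]]].
  by rewrite hm_mul ?qq0 //; apply: hm_in_H.
- apply/forall_inP => x /H_elim [a0 [a1 [b0 [b1 [c0 [c1 ->]]]]]].
  by rewrite hm_inv; apply: hm_in_H.
Qed.
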